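(* Let $\mathbf A$ and $\mathbf B$ be t-algebras of type $\tau$ with traces $\mathsf a$ and $\mathsf b$. The following are equivalent: (1) $\mathbf B\in\mathrm V_E(\mathbf A)$ and the natural homomorphism $t^{\mathbf A}\mapsto t^{\mathbf B}$ from $\mathbf A^\uparrow$ onto $\mathbf B^\uparrow$ is uniformly continuous; (2) for every $s\in\mathsf b$, the t-subalgebra $\mathbf B_{\bar s}$ of $\mathbf B$ generated by $s$ is a t-homomorphic image of a t-subalgebra of a finite t-power of $\mathbf A$.
   Context: $\mathbb N=\{1,2,\dots\}$. A thread on $A$ is $s\in A^{\mathbb N}$; $r[a_1,\dots,a_n]$ is the thread with entries $a_i$ for $i\le n$ and $r_i$ for $i>n$; $r\equiv_{\mathbb N}s$ iff $\{i:r_i\neq s_i\}$ is finite, $[s]_{\mathbb N}$ its class. A trace on $A$ is a nonempty union of $\equiv_{\mathbb N}$-classes. A t-algebra of type $\tau$ and trace $\mathsf a$ is $(A,\mathsf a,\sigma^{\mathbf A})_{\sigma\in\tau}$ with $\sigma^{\mathbf A}:\mathsf a\to A$ arbitrary. t-subalgebra: $(C,\mathsf c,\sigma^{\mathbf A}|_{\mathsf c})$ with $C\subseteq A$, $\mathsf c\subseteq\mathsf a$ a trace on $C$, $\sigma^{\mathbf A}(\mathsf c)\subseteq C$. t-homomorphism: $h:A\to B$ with $h^{\mathbb N}(\mathsf a)\subseteq\mathsf b$ ($h^{\mathbb N}$ coordinatewise) and $h\circ\sigma^{\mathbf A}=\sigma^{\mathbf B}\circ h^{\mathbb N}$ on $\mathsf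 a$; onto (t-homomorphic image) if $h$ and $h^{\mathbb N}:\mathsf a\to\mathsf b$ are surjective. Finite t-power $\mathbf A^n$: universe $A^n$, trace $\mathsf a^n$ (a tuple $(r^1,\dots,r^n)$ of threads identified with the thread of entries $(r^1_i,\dots,r^n_i)$), operations componentwise. $\tau$-terms: least set containing $\mathsf e_1,\mathsf e_2,\dots$ and $\sigma(t_1,\dots,t_n,\mathsf e_{n+1},\dots)$; term operations $\mathsf e_i^{\mathbf A}(s)=s_i$, $\sigma(t_1,\dots,t_n,\mathsf e_{n+1},\dots)^{\mathbf A}(s)=\sigma^{\mathbf A}(s[t_1^{\mathbf A}(s),\dots,t_n^{\mathbf A}(s)])$; $\theta_{\mathbf A}=\{(t,u):t^{\mathbf A}=u^{\mathbf A}\}$; $\mathrm V_E(\mathbf A)=\{\mathbf B:\theta_{\mathbf A}\subseteq\theta_{\mathbf B}\}$ (the Et-variety generated by $\mathbf A$). $\mathbf B_{\bar s}$ ($s\in\mathsf b$): universe $\{t^{\mathbf B}(s)\}$, trace $[s]_{\mathbb N}\cap(B_{\bar s})^{\mathbb N}$. The term clone algebra $\mathbf A^\uparrow$ is the set $\{t^{\mathbf A}\}$ of term operations with $\mathsf e_i=\mathsf e_i^{\mathbf A}$, $\sigma=\sigma^{\mathbf A}$ and $q_n(\varphi,\psi_1,\dots,\psi_n)(s)=\varphi(s[\psi_1(s),\dots,\psi_n(s)])$. The natural homomorphism $t^{\mathbf A}\mapsto t^{\mathbf B}$ is uniformly continuous if for every $s\in\mathsf b$ there exist $n$ and $r^1,\dots,r^n\in\mathsf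 a$ such that for all $\tau$-terms $t,u$: $t^{\mathbf A}(r^j)=u^{\mathbf A}(r^j)$ for all $j\le n$ implies $t^{\mathbf B}(s)=u^{\mathbf B}(s)$. *)

(* Defs.v *)
From mathcomp Require Import all_boot.
Set Implicit Arguments.
Unset Strict Implicit.
Unset Printing Implicit Defensive.

(* Threads on A: indexed by N = {1,2,...}; we encode index i (>= 1) as
   the Rocq natural number i-1, so a thread is a function nat -> A. *)
Definition thread (A : Type) := nat -> A.

Definition eqN (A : Type) (r s : thread A) : Prop :=
  exists m : nat, forall i, m <= i -> r i = s i.

Definition is_trace_on (A : Type) (C : A -> Prop) (c : thread A -> Prop) : Prop :=
  [/\ (forall r, c r -> forall i, C (r i)),
      (exists r, c r)
    & (forall r s, eqN r s -> (forall i, C (s i)) -> c r -> c s)].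

Record talg (Sig : Type) := TAlg {
  carrier :> Type;
  tr : thread carrier -> Prop;
  op : Sig -> thread carrier -> carrier;   (* only its values on tr matter *)
  tr_trace : is_trace_on (fun _ => True) tr
}.

(* tau-terms: Var i is e_{i+1}; Op f [t_1;..;t_n] is f(t_1,..,t_n,e_{n+1},...) *)
Inductive term (Sig : Type) :=
| Var : nat -> term Sig
| Op : Sig -> seq (term Sig) -> term Sig.

Definition upd (A : Type) (r : thread A) (l : seq A) : thread A :=
  fun i => nth (r i) l i.

Fixpoint eval (Sig : Type) (A : Type) (o : Sig -> thread A -> A)
  (t : term Sig) (s : thread A) : A :=
  match t with
  | Var i => s i
  | Op f ts => o f (upd s (map (fun u => eval o u s) ts))
  end.

Definition top (Sig : Type) (A : talg Sig) (t : term Sig) (s : thread A) : A :=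
  eval (@op Sig A) t s.
Arguments top {Sig} A t s.

Definition theta (Sig : Type) (A : talg Sig) (t u : term Sig) : Prop :=
  forall s, @tr Sig A s -> top A t s = top A u s.

Definition in_VE (Sig : Type) (A B : talg Sig) : Prop :=
  forall t u, theta A t u -> theta B t u.

Definition unif_cont (Sig : Type) (A B : talg Sig) : Prop :=
  forall s, @tr Sig B s ->
    exists (n : nat) (r : 'I_n -> thread A),
      (forall j, @tr Sig A (r j)) /\
      (forall t u, (forall j, top A t (r j) = top A u (r j)) ->
                   top B t s = top B u s).

(* Finite t-power A^n: universe 'I_n -> A, trace a^n, componentwise ops.
   A thread of A^n is identified with an n-tuple of threads of A. *)
Definition pow_tr (Sig : Type) (A : talg Sig) (n : nat)
  (r : thread ('I_n -> A)) : Prop :=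
  forall j : 'I_n, @tr Sig A (fun i => r i j).

Definition pow_op (Sig : Type) (A : talg Sig) (n : nat)
  (f : Sig) (r : thread ('I_n -> A)) : 'I_n -> A :=
  fun j => @op Sig A f (fun i => r i j).
Arguments pow_op {Sig} A {n} f r.
Arguments pow_tr {Sig} A {n} r.

Definition is_tsub_pow (Sig : Type) (A : talg Sig) (n : nat)
  (C : ('I_n -> A) -> Prop) (c : thread ('I_n -> A) -> Prop) : Prop :=
  [/\ is_trace_on C c,
      (forall r, c r -> pow_tr A r)
    & (forall f r, c r -> C (pow_op A f r))].

Definition gen_univ (Sig : Type) (B : talg Sig) (s : thread B) (y : B) : Prop :=
  exists t, y = top B t s.

Definition gen_tr (Sig : Type) (B : talg Sig) (s : thread B) (w : thread B) : Prop :=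
  eqN s w /\ forall i, gen_univ s (w i).

(* B_{\bar s} is a t-homomorphic image (via h) of the t-subalgebra (C, c)
   of A^n, whose operations are those of A^n restricted to c; the operations
   of B_{\bar s} are those of B restricted to its trace. *)
Definition onto_thom_gen (Sig : Type) (A B : talg Sig) (n : nat)
  (C : ('I_n -> A) -> Prop) (c : thread ('I_n -> A) -> Prop)
  (s : thread B) (h : ('I_n -> A) -> B) : Prop :=
  [/\ (forall x, C x -> gen_univ s (h x)),
      (forall r, c r -> gen_tr s (fun i => h (r i))),
      (forall f r, c r -> h (pow_op A f r) = @op Sig B f (fun i => h (r i))),
      (forall y, gen_univ s y -> exists2 x, C x & h x = y)
    & (forall w, gen_tr s w -> exists2 r, c r & (fun i => h (r i)) = w)].

Arguments is_tsub_pow {Sig} A {n} C c.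
Arguments gen_univ {Sig} B s y.
Arguments gen_tr {Sig} B s w.
Arguments onto_thom_gen {Sig} A B {n} C c s h.
Arguments in_VE {Sig} A B.
Arguments unif_cont {Sig} A B.
Arguments theta {Sig} A t u.

(* Main.v *)
Require Import Defs.
From mathcomp Require Import all_boot.
From Stdlib Require Import FunctionalExtensionality ClassicalEpsilon.

Set Implicit Arguments.
Unset Strict Implicit.

Fixpoint term_ind' (Sig : Type) (P : term Sig -> Prop)
  (HV : forall i, P (Var Sig i))
  (HO : forall f ts, (forall t, List.In t ts -> P t) -> P (Op f ts)) (t : term Sig) : P t :=
  match t with
  | Var i => HV i
  | Op f ts => HO f ts ((fix go (l : seq (term Sig)) : forall u, List.In u l -> P u :=
       match l with
       | nil => fun _ H => False_ind _ H
       | cons x l' => fun u H => match H with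
                     | or_introl e => eq_ind x P (term_ind' HV HO x) u e
                     | or_intror H' => go l' u H'
                     end
       end) ts)
  end.

Lemma nth_proj (X Y : Type) (l : seq (X -> Y)) d i j :
  nth d l i j = nth (d j) (map (fun g => g j) l) i.
Proof. elim: l i => [|x l IH] [|i] //=. Qed.

Lemma nth_fun (X Y : Type) (f : X -> Y) (l : seq X) d i :
  f (nth d l i) = nth (f d) (map f l) i.
Proof. elim: l i => [|x l IH] [|i] //=. Qed.

Lemma map_ext_In (X Y : Type) (f g : X -> Y) (l : seq X) :
  (forall x, List.In x l -> f x = g x) -> map f l = map g l.
Proof.
elim: l => [|x l IH] H //=. rewrite H /=; last by left.
by rewrite IH // => y Hy; apply: H; right.
Qed.

Lemma nth_cases (X : Type) (l : seq X) d i : nth d l i = d \/ List.In (nth d l i) l.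
Proof.
elim: l i => [|x l IH] [|i] /=; auto.
by case: (IH i); auto.
Qed.

Lemma in_map' (X Y : Type) (f : X -> Y) (l : seq X) y :
  List.In y (map f l) -> exists x, f x = y /\ List.In x l.
Proof.
elim: l => [|x l IH] //= [<-|H]; first by exists x; auto.
by case: (IH H) => z [? ?]; exists z; auto.
Qed.

Definition vecA (Sig : Type) (A : talg Sig) (n : nat) (t : term Sig)
  (r : thread ('I_n -> A)) : 'I_n -> A :=
  fun j => top A t (fun i => r i j).

Lemma vecA_Op (Sig : Type) (A : talg Sig) (n : nat) f ts (r : thread ('I_n -> A)) :
  vecA (Op f ts) r = pow_op A f (upd r (map (fun u => vecA u r) ts)).
Proof.
apply: functional_extensionality => j.
rewrite /vecA /pow_op /top /=; f_equal.
apply: functional_extensionality => i.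
rewrite /upd nth_proj -map_comp. reflexivity.
Qed.

Lemma upd_eqN (X : Type) (r : thread X) (l : seq X) : eqN r (upd r l).
Proof. exists (size l) => i Hi. by rewrite /upd nth_default. Qed.

Lemma key (Sig : Type) (A B : talg Sig) n (C : ('I_n -> A) -> Prop) c (s : thread B) h :
  is_tsub_pow A C c -> onto_thom_gen A B C c s h ->
  forall t r, c r -> C (vecA t r) /\ h (vecA t r) = top B t (fun i => h (r i)).
Proof.
move=> [[Hent _ Hcl] Hpt Hop] [_ _ Hh _ _] t.
elim/term_ind': t => [i|f ts IH] r cr.
  by split => //; exact: (Hent r cr i).
rewrite vecA_Op.
set r'' := upd r _.
have cr'' : c r''.
  apply: (Hcl r) => //; first exact: upd_eqN.
  move=> i; rewrite /r'' /upd; case: (nth_cases (map (fun u => vecA u r) ts) (r i) i) => [->|H].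
    exact: Hent.
  by case: (in_map' H) => u [<- Hu]; case: (IH u Hu r cr).
split; first exact: Hop.
rewrite Hh // /top /=; f_equal.
apply: functional_extensionality => i.
rewrite /r'' /upd [LHS]nth_fun -map_comp; congr nth.
apply: map_ext_In => u Hu /=. by case: (IH u Hu r cr).
Qed.

Lemma dir2 (Sig : Type) (A B : talg Sig) :
  (forall s : thread B, @tr Sig B s ->
     exists (n : nat) (C : ('I_n -> A) -> Prop) (c : thread ('I_n -> A) -> Prop),
       is_tsub_pow A C c /\
       exists h : ('I_n -> A) -> B, onto_thom_gen A B C c s h) ->
  unif_cont A B.
Proof.
move=> H s trs.
case: (H s trs) => n [C [c [ts [h oh]]]].
have gs : gen_tr B s s by split; [exists 0 | move=> i; exists (Var Sig i)].
have [_ _ _ _ H5] := oh.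
case: (H5 s gs) => r cr hr.
exists n, (fun j i => r i j); split.
  by move=> j; have [_ Hpt _] := ts; apply: Hpt.
move=> t u Htu.
have E : vecA t r = vecA u r by apply: functional_extensionality.
have [_ E1] := key ts oh t cr.
have [_ E2] := key ts oh u cr.
by rewrite -hr -E1 -E2 E.
Qed.

Lemma dir1 (Sig : Type) (A B : talg Sig) : unif_cont A B ->
  (forall s : thread B, @tr Sig B s ->
     exists (n : nat) (C : ('I_n -> A) -> Prop) (c : thread ('I_n -> A) -> Prop),
       is_tsub_pow A C c /\
       exists h : ('I_n -> A) -> B, onto_thom_gen A B C c s h).
Proof.
move=> UC s trs.
case: (UC s trs) => n [R [HR HU]].
pose rr : thread ('I_n -> A) := fun i j => R j i.
pose C x := exists t, x = vecA t rr.
pose c r := eqN rr r /\ forall i, C (r i).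
pose inh := inhabits (Var Sig 0).
pose pick x := epsilon inh (fun t => x = vecA t rr).
pose h x := top B (pick x) s.
have hE : forall t, h (vecA t rr) = top B t s.
  move=> t; rewrite /h /pick.
  have E := epsilon_spec inh (fun t' => vecA t rr = vecA t' rr) (ex_intro _ t erefl).
  symmetry; apply: HU => j. exact: (congr1 (fun x => x j) E).
have opl : forall f r, c r -> exists l, pow_op A f r = vecA (Op f l) rr /\
    upd s (map (fun u => top B u s) l) = (fun i => h (r i)).
  move=> f r [[m Hm] Hr].
  pose T i := epsilon inh (fun t => r i = vecA t rr).
  have HT : forall i, r i = vecA (T i) rr by move=> i; exact: (epsilon_spec inh (fun t => r i = vecA t rr) (Hr i)).
  exists (mkseq T m); split.
    rewrite vecA_Op; congr pow_op.
    apply: functional_extensionality => i; rewrite /upd.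
    case: (ltnP i m) => Hi.
      by rewrite (nth_map (Var Sig 0)) ?size_mkseq // nth_mkseq // HT.
    rewrite nth_default; first by rewrite (Hm i Hi).
    by rewrite size_map size_mkseq.
  apply: functional_extensionality => i; rewrite /upd.
  case: (ltnP i m) => Hi.
    by rewrite (nth_map (Var Sig 0)) ?size_mkseq // nth_mkseq // HT hE.
  rewrite nth_default; last by rewrite size_map size_mkseq.
  rewrite -(Hm i Hi).
  symmetry; exact: (hE (Var Sig i)).
exists n, C, c; split.
  split.
  - split.
    + by move=> r [_ Hr].
    + exists rr; split; first by exists 0.
      by move=> i; exists (Var Sig i).
    + move=> r1 r2 [m Hm] H2 [[m' Hm'] _]; split => //.
      exists (maxn m m') => i; rewrite geq_max => /andP[h1 h2].
      by rewrite (Hm' i h2) (Hm i h1).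
  - move=> r [[m Hm] _] j.
    have [_ _ Hcl] := tr_trace A.
    apply: (Hcl (R j)) => //.
    by exists m => i Hi; rewrite -(Hm i Hi).
  - move=> f r cr; case: (opl f r cr) => l [E1 _].
    by exists (Op f l).
exists h; split.
- by move=> x _; exists (pick x).
- move=> r [[m Hm] Hr]; split; last by move=> i; exists (pick (r i)).
  exists m => i Hi; rewrite -(Hm i Hi); symmetry; exact: (hE (Var Sig i)).
- move=> f r cr; case: (opl f r cr) => l [E1 E2].
  by rewrite E1 hE -E2.
- move=> y [t ->]; exists (vecA t rr); [by exists t | exact: hE].
- move=> w [[m Hm] Hw].
  pose T i := epsilon inh (fun t => w i = top B t s).
  have HT : forall i, w i = top B (T i) s by move=> i; exact: (epsilon_spec inh (fun t => w i = top B t s) (Hw i)).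
  exists (fun i => if i < m then vecA (T i) rr else rr i).
    split.
      by exists m => i Hi; rewrite ltnNge Hi.
    by move=> i; case: ifP => _; [exists (T i) | exists (Var Sig i)].
  apply: functional_extensionality => i; case: ifP => Hi.
    by rewrite hE HT.
  have Hi' : m <= i by rewrite leqNgt Hi.
  rewrite -(Hm i Hi'); exact: (hE (Var Sig i)).
Qed.

Theorem mainTheorem19 (Sig : Type) (A B : talg Sig) :
  (in_VE A B /\ unif_cont A B) <->
  (forall s : thread B, @tr Sig B s ->
     exists (n : nat) (C : ('I_n -> A) -> Prop) (c : thread ('I_n -> A) -> Prop),
       is_tsub_pow A C c /\
       exists h : ('I_n -> A) -> B, onto_thom_gen A B C c s h).
Proof.
split; first by case=> _ UC; exact: dir1.
move=> H; have UC := dir2 H; split => //.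
move=> t u Hth s trs.
case: (UC s trs) => n [R [HR HU]].
by apply: HU => j; apply: Hth.
Qed.
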